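(* Let $R$ be a Krull domain. If $R$ has the Z-property, then the divisor class group $Cl(R)$ is a torsion group.
   Context: For $a,b\in R$, $[a,b]\neq1$ means $a,b$ have a common nonunit divisor, and $[a,b]=1$ means they do not. $R$ has the Z-property if whenever $a,b,c,d,e$ are nonzero nonunits of $R$ with $abc=de$, then $[ab,d]\neq 1$ or $[ab,e]\neq 1$. *)

(* Defs.v *)
From Stdlib Require Lists.List.
From HB Require Import structures.
From mathcomp Require Import all_boot all_order all_algebra.
From mathcomp Require Export fraction.
Set Implicit Arguments. Unset Strict Implicit. Unset Printing Implicit Defensive.
Import Order.TTheory GRing.Theory Num.Theory.
Local Open Scope ring_scope.

Section Defs.
Variable R : idomainType.
Local Notation K := {fraction R}.
Local Notation "x %:F" := (@FracField.tofrac R x).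

Definition inR (x : K) : Prop := exists r : R, x = r%:F.

Definition rdvd (a b : R) : Prop := exists c : R, b = c * a.
Definition nonzero_nonunit (a : R) : Prop := a != 0 /\ a \isn't a GRing.unit.
Definition common_nonunit_divisor (a b : R) : Prop :=
  exists c : R, c \isn't a GRing.unit /\ rdvd c a /\ rdvd c b.

Definition Z_property : Prop :=
  forall a b c d e : R,
    nonzero_nonunit a -> nonzero_nonunit b -> nonzero_nonunit c ->
    nonzero_nonunit d -> nonzero_nonunit e ->
    a * b * c = d * e ->
    common_nonunit_divisor (a * b) d \/ common_nonunit_divisor (a * b) e.

(* discrete (rank one, normalized) valuations of the fraction field *)
Record dvaluation := DVal {
  dv :> K -> int;
  dv_mul : forall x y, x != 0 -> y != 0 -> dv (x * y) = dv x + dv y;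
  dv_add : forall x y, x != 0 -> y != 0 -> x + y != 0 ->
             Num.min (dv x) (dv y) <= dv (x + y);
  dv_surj : forall n : int, exists x, x != 0 /\ dv x = n
}.

Definition in_vring (v : dvaluation) (x : K) : Prop := x = 0 \/ 0 <= v x.

(* Krull domain: R is the intersection of a defining family of DVRs of its
   fraction field, of finite character. *)
Definition Krull_domain : Prop :=
  exists (I : Type) (v : I -> dvaluation),
    (forall x : K, inR x <-> forall i, in_vring (v i) x) /\
    (forall x : K, x != 0 ->
       exists l : seq I, forall i, v i x != 0 -> Stdlib.Lists.List.In i l).

Definition finv (S : K -> Prop) : K -> Prop :=
  fun y => forall s, S s -> inR (y * s).
Definition vclos (S : K -> Prop) : K -> Prop := finv (finv S).

Definition fractional_ideal (F : K -> Prop) : Prop :=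
  F 0 /\ (forall x y, F x -> F y -> F (x + y)) /\
  (forall (r : R) x, F x -> F (r%:F * x)) /\
  (exists x, F x /\ x != 0) /\
  (exists d : R, d != 0 /\ forall x, F x -> inR (d%:F * x)).

Definition divisorial (F : K -> Prop) : Prop :=
  fractional_ideal F /\ forall x, F x <-> vclos F x.

(* set of products of n elements of F; its v-closure is (F^n)_v *)
Definition setpow (F : K -> Prop) (n : nat) : K -> Prop :=
  fun y => exists f : 'I_n -> K, (forall i, F (f i)) /\ y = \prod_i f i.

Definition principal_frac (x : K) : K -> Prop :=
  fun y => exists r : R, y = r%:F * x.

(* Cl(R) = divisorial fractional ideals (under v-multiplication) modulo
   principal ones; it is torsion iff every class has finite order. *)
Definition class_group_torsion : Prop :=
  forall F : K -> Prop, divisorial F ->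
    exists n : nat, (0 < n)%N /\
      exists x : K, x != 0 /\ forall y, vclos (setpow F n) y <-> principal_frac x y.

End Defs.

(* Main.v *)
Require Import Defs.
From mathcomp Require Import all_boot all_algebra.
From mathcomp Require Import all_order generic_quotient zify ring.
From Stdlib Require Import Classical ClassicalEpsilon.
Require Import Defs.
Set Implicit Arguments. Unset Strict Implicit. Unset Printing Implicit Defensive.
Import Order.TTheory GRing.Theory Num.Theory.
Local Open Scope ring_scope.

Local Open Scope quotient_scope.
Lemma frac_decomp (R : idomainType) (x : {fraction R}) :
  exists a b : R, b != 0 /\ x = (FracField.tofrac a) / (FracField.tofrac b).
Proof.
elim/quotW: x => r.
exists r.1, r.2; have d0 := denom_ratioP r; split=> //.
have H : \pi_({fraction R}) r * FracField.tofrac r.2 = FracField.tofrac r.1.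
  unlock FracField.tofrac.
  change (FracField.mul (\pi_({fraction R}) r) (\pi_({fraction R}) (Ratio r.2 1)) = \pi_({fraction R}) (Ratio r.1 1)).
  rewrite !piE.
  apply/eqmodP; rewrite /= FracField.equivfE /FracField.mulf /=.
  rewrite !numden_Ratio ?mulf_neq0 ?oner_eq0 //.
  by rewrite !mulr1 mulrC.
rewrite -H mulfK // tofrac_eq0 //.
Qed.
Local Close Scope quotient_scope.

Lemma ex_min_nat (P : nat -> Prop) : (exists n, P n) ->
  exists n, P n /\ forall m, P m -> (n <= m)%N.
Proof.
case=> n Pn.
elim: n {-2}n (leqnn n) Pn => [|N IH] n len Pn.
  exists n; split=> // m _; move: len; rewrite leqn0 => /eqP ->; done.
case: (classic (exists m, P m /\ (m < n)%N)) => [[m [Pm ltm]]|H].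
  by apply: (IH m) => //; lia.
exists n; split=> // m Pm; case: (leqP n m) => // ltm.
by exfalso; apply: H; exists m.
Qed.

Section Val.
Variable R : idomainType.
Local Notation K := {fraction R}.
Variable w : dvaluation R.

Lemma dv1 : w 1 = 0.
Proof. have := @dv_mul _ w 1 1 (oner_neq0 _) (oner_neq0 _); rewrite mulr1; lia. Qed.

Lemma dvN1 : w (-1) = 0.
Proof.
have h : (-1 : K) != 0 by rewrite oppr_eq0 oner_neq0.
have := @dv_mul _ w (-1) (-1) h h; rewrite mulrNN mulr1 dv1; lia.
Qed.

Lemma dvM x y : x != 0 -> y != 0 -> w (x * y) = w x + w y.
Proof. exact: dv_mul. Qed.

Lemma dvN x : x != 0 -> w (- x) = w x.
Proof.
move=> hx; rewrite -mulN1r dvM ?dvN1 ?add0r // oppr_eq0 oner_neq0 //.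
Qed.

Lemma dvV x : x != 0 -> w (x^-1) = - w x.
Proof.
move=> hx; have := dvM (invr_neq0 hx) hx; rewrite mulVf // dv1; lia.
Qed.

Lemma dvX x n : x != 0 -> w (x ^+ n) = n%:Z * w x.
Proof.
move=> hx; elim: n => [|n IH]; first by rewrite expr0 dv1 mul0r.
rewrite exprS dvM ?expf_neq0 // IH; lia.
Qed.

Lemma dvDiv x y : x != 0 -> y != 0 -> w (x / y) = w x - w y.
Proof. by move=> hx hy; rewrite dvM ?invr_neq0 // dvV. Qed.

Lemma dvD_lt x y : x != 0 -> y != 0 -> w x < w y -> x + y != 0 /\ w (x + y) = w x.
Proof.
move=> hx hy lt.
have hxy : x + y != 0.
  apply/negP => /eqP h; have : y = - x by apply/eqP; rewrite -addr_eq0 addrC h.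
  move=> e; move: lt; rewrite e dvN //; lia.
split=> //.
have h1 := @dv_add _ w x y hx hy hxy.
have h2 : x = (x + y) + (- y) by rewrite addrK.
have hny : - y != 0 by rewrite oppr_eq0.
have hxx : (x + y) + (- y) != 0 by rewrite -h2.
have h3 := @dv_add _ w (x + y) (- y) hxy hny hxx; rewrite -h2 dvN // in h3.
move: h1 h3; rewrite /Num.min.
case: ifP => _; case: ifP => _; lia.
Qed.

Lemma dvD_ge x y t : x != 0 -> y != 0 -> x + y != 0 -> t <= w x -> t <= w y -> t <= w (x + y).
Proof.
move=> hx hy hxy h1 h2; have := @dv_add _ w x y hx hy hxy.
rewrite /Num.min; case: ifP => _; lia.
Qed.

Lemma dv_sum_gt (ks : seq nat) (F : nat -> K) t :
  (forall k, k \in ks -> F k != 0 -> t < w (F k)) ->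
  \sum_(k <- ks) F k != 0 -> t < w (\sum_(k <- ks) F k).
Proof.
elim: ks => [|k ks IH] H; first by rewrite big_nil eqxx.
rewrite big_cons.
have IH' : \sum_(j <- ks) F j != 0 -> t < w (\sum_(j <- ks) F j).
  by apply: IH => j hj; apply: H; rewrite inE hj orbT.
case: (eqVneq (F k) 0) => [->|hF]; first by rewrite add0r.
case: (eqVneq (\sum_(j <- ks) F j) 0) => [->|hS]; first by rewrite addr0; apply: H; rewrite mem_head.
move=> hne; have h1 := H k (mem_head _ _) hF; have h2 := IH' hS.
have := @dv_add _ w _ _ hF hS hne; rewrite /Num.min; case: ifP => _ h; [exact: lt_le_trans h1 h | exact: lt_le_trans h2 h].
Qed.

Lemma dv_surj1 : exists x, x != 0 /\ w x = 1.
Proof. by case: (@dv_surj _ w 1) => x [hx e]; exists x. Qed.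

End Val.


Section Krull.
Variable R : idomainType.
Local Notation K := {fraction R}.
Local Notation "x %:F" := (@FracField.tofrac R x).
Local Notation inK := (@inR R).
Variable I : Type.
Variable v : I -> dvaluation R.
Hypothesis hR : forall x : K, inK x <-> forall i, in_vring (v i) x.
Hypothesis hfin : forall x : K, x != 0 -> exists l : seq I, forall i, v i x != 0 -> List.In i l.

Lemma inR0 : inK (0 : K). Proof. by exists 0; rewrite tofrac0. Qed.
Lemma inR1 : inK (1 : K). Proof. by exists 1; rewrite tofrac1. Qed.
Lemma inR_tofrac (r : R) : inK r%:F. Proof. by exists r. Qed.
Lemma inRD x y : inK x -> inK y -> inK (x + y).
Proof. by case=> a -> [b ->]; exists (a + b); rewrite tofracD. Qed.
Lemma inRN x : inK x -> inK (- x).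
Proof. by case=> a ->; exists (- a); rewrite tofracN. Qed.
Lemma inRM x y : inK x -> inK y -> inK (x * y).
Proof. by case=> a -> [b ->]; exists (a * b); rewrite tofracM. Qed.
Lemma inRX x n : inK x -> inK (x ^+ n).
Proof. by case=> a ->; exists (a ^+ n); rewrite tofracXn. Qed.

Lemma vR x i : inK x -> x != 0 -> 0 <= v i x.
Proof. by move=> /hR H hx; case: (H i) => // e; move: hx; rewrite e eqxx. Qed.

Lemma Rv x : (x != 0 -> forall i, 0 <= v i x) -> inK x.
Proof.
move=> H; apply/hR => i; case: (eqVneq x 0) => [->|hx]; first by left.
by right; apply: H.
Qed.

Definition Pk k (x : K) := inK x /\ (x != 0 -> 1 <= v k x).
Definition Cond (t x : K) := inK x /\ inK (x * t).
Definition AC k := exists t, ~ inK t /\ forall x, Pk k x <-> Cond t x.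
Definition Rprime (Q : K -> Prop) :=
  forall a b, inK a -> inK b -> Q (a * b) -> Q a \/ Q b.

Lemma Pk0 k : Pk k 0. Proof. by split; [exact: inR0|rewrite eqxx]. Qed.
Lemma not_Pk1 k : ~ Pk k 1.
Proof. by case=> _ /(_ (oner_neq0 _)); rewrite dv1. Qed.
Lemma PkD k x y : Pk k x -> Pk k y -> Pk k (x + y).
Proof.
case=> hx1 hx2 [hy1 hy2]; split; first exact: inRD.
case: (eqVneq x 0) => [->|hx]; first by rewrite add0r.
case: (eqVneq y 0) => [->|hy]; first by rewrite addr0.
by move=> hxy; apply: dvD_ge => //; [apply: hx2|apply: hy2].
Qed.
Lemma PkN k x : Pk k x -> Pk k (- x).
Proof.
case=> h1 h2; split; first exact: inRN.
by rewrite oppr_eq0 => hx; rewrite dvN //; apply: h2.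
Qed.
Lemma PkB k x y : Pk k x -> Pk k y -> Pk k (x - y).
Proof. by move=> h1 h2; apply: PkD => //; apply: PkN. Qed.
Lemma PkM k x y : Pk k x -> inK y -> Pk k (x * y).
Proof.
case=> h1 h2 hy; split; first exact: inRM.
move=> hxy; have hx : x != 0 by apply: contraNneq hxy => ->; rewrite mul0r.
have hy0 : y != 0 by apply: contraNneq hxy => ->; rewrite mulr0.
rewrite dvM //; have := h2 hx; have := vR k hy hy0; lia.
Qed.
Lemma Pk_prime k : Rprime (Pk k).
Proof.
move=> a b ha hb [_ h].
case: (eqVneq a 0) => [->|a0]; first by left; exact: Pk0.
case: (eqVneq b 0) => [->|b0]; first by right; exact: Pk0.
have := h (mulf_neq0 a0 b0); rewrite dvM // => h1.
have := vR k ha a0; have := vR k hb b0 => h2 h3.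
case: (lerP 1 (v k a)) => h4; first by left; split.
by right; split => // _; lia.
Qed.

Lemma exists_Pk k : exists x, x != 0 /\ Pk k x.
Proof.
case: (dv_surj1 (v k)) => y [hy vy].
case: (frac_decomp y) => a [b [b0 e]].
have a0 : a%:F != 0 by apply: contraNneq hy; rewrite e => ->; rewrite mul0r.
have b0' : b%:F != 0 by rewrite tofrac_eq0.
exists a%:F; split => //; split; first exact: inR_tofrac.
move=> _; move: vy; rewrite e dvDiv // => h.
have := vR k (inR_tofrac b) b0'; lia.
Qed.

Lemma CIC t (Q : K -> Prop) : (exists q, q != 0 /\ Q q) -> (forall q, Q q -> inK q) ->
  (forall q, Q q -> Q (t * q)) -> inK t.
Proof.
case=> q0 [q00 Qq0] QR Qt.
have Hn : forall n, Q (t ^+ n * q0).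
  by elim=> [|n IH]; [rewrite expr0 mul1r|rewrite exprS -mulrA; apply: Qt].
apply: Rv => t0 i; case: (lerP 0 (v i t)) => // lt.
pose n := (absz (v i q0)).+1.
have h := vR i (QR _ (Hn n)) (mulf_neq0 (expf_neq0 n t0) q00).
rewrite dvM ?expf_neq0 // dvX // in h.
have : (0 <= v i q0) by apply: vR q00; apply: QR.
rewrite /n in h; nia.
Qed.

Lemma PA (y : K) (Q : K -> Prop) : y != 0 -> Rprime Q -> ~ Q 1 ->
  (forall x, Cond y x -> Q x) -> exists m, v m y < 0 /\ forall x, Pk m x -> Q x.
Proof.
move=> y0 Qp Q1 HQ; apply: NNPP => H.
have H' : forall m, v m y < 0 -> exists b, Pk m b /\ ~ Q b.
  move=> m hm; apply: NNPP => H2; apply: H; exists m; split => // x Px.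
  by apply: NNPP => nQ; apply: H2; exists x.
have Q0 : Q 0 by apply: HQ; split; [exact: inR0|rewrite mul0r; exact: inR0].
have Qpow : forall b n, inK b -> Q (b ^+ n.+1) -> Q b.
  move=> b n hb; elim: n => [|n IH]; first by rewrite expr1.
  rewrite exprS => /(Qp _ _ hb (inRX _ hb)) [] //.
case: (hfin y0) => l hl.
have : exists B, [/\ inK B, B != 0, ~ Q B &
    forall m, List.In m l -> v m y < 0 -> - v m y <= v m B].
  elim: l {hl} => [|m l [B [hB1 hB2 hB3 hB4]]].
    by exists 1; split => //; [exact: inR1|exact: oner_neq0].
  case: (lerP 0 (v m y)) => hm.
    exists B; split => // m' [<-|hm']; first lia.
    exact: hB4.
  case: (H' m hm) => b [[hb1 hb2] hb3].
  have b0 : b != 0 by apply/eqP => eb; apply: hb3; rewrite eb; exact: Q0.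
  pose e := absz (v m y).
  exists (B * b ^+ e.+1); split.
  - by apply: inRM => //; apply: inRX.
  - by rewrite mulf_neq0 ?expf_neq0.
  - by case/(Qp _ _ hB1 (inRX _ hb1)) => // /(Qpow _ _ hb1).
  - move=> m' hm' hy; rewrite dvM ?expf_neq0 // dvX //.
    have := vR m' hb1 b0; have := vR m' hB1 hB2 => h1 h2.
    case: hm' => [e'|hm'].
      subst m'; have := hb2 b0; rewrite /e; nia.
    have := hB4 _ hm' hy; nia.
case=> B [hB1 hB2 hB3 hB4]; apply: hB3; apply: HQ; split => //.
apply: Rv => By i; rewrite dvM //; have := vR i hB1 hB2.
case: (lerP 0 (v i y)) => hi; first lia.
have := hB4 i (hl i ltac:(lia)) hi; lia.
Qed.

Lemma sum_le_eq (l : seq I) (f g : I -> nat) : (forall i, (f i <= g i)%N) ->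
  (\sum_(i <- l) g i <= \sum_(i <- l) f i)%N -> forall i, List.In i l -> f i = g i.
Proof.
move=> fg; elim: l => [|a l IH]; first by [].
rewrite !big_cons => hs i [<-|hi].
  have := fg a; have : (\sum_(j <- l) f j <= \sum_(j <- l) g j)%N.
    by apply: leq_sum => j _.
  lia.
apply: IH => //; have := fg a; lia.
Qed.

Lemma A4 y : ~ inK y -> exists t, [/\ ~ inK t, forall x, Cond y x -> Cond t x & Rprime (Cond t)].
Proof.
move=> ny.
have y0 : y != 0 by apply: contra_not_neq ny => ->; exact: inR0.
case: (frac_decomp y) => a [b [b0 e]].
have b0' : b%:F != 0 by rewrite tofrac_eq0.
have Cc : Cond y b%:F.
  split; first exact: inR_tofrac.
  by rewrite e mulrC mulfVK //; exact: inR_tofrac.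
case: (hfin b0') => l hl.
pose phi (t : K) := (\sum_(i <- l) (if (v i t < 0)%R then absz (v i t) else 0))%N.
pose P n := exists t, [/\ ~ inK t, forall x, Cond y x -> Cond t x & phi t = n].
case: (@ex_min_nat P) => [|n [[t [nt Ct pt]] mn]]; first by exists (phi y); exists y.
exists t; split => // a' b' ha hb Cab.
case: (classic (Cond t a')) => [|nCa]; first by left.
right.
have t0 : t != 0 by apply: contra_not_neq nt => ->; exact: inR0.
have a0 : a' != 0.
  apply: contra_not_neq nCa => ->; split; [exact: inR0|rewrite mul0r; exact: inR0].
have nt' : ~ inK (a' * t) by move=> h; apply: nCa; split => //; rewrite mulrC.
have Ct' : forall x, Cond y x -> Cond (a' * t) x.
  move=> x /Ct [h1 h2]; split => //; rewrite mulrA [x * a']mulrC -mulrA.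
  exact: inRM.
have le1 : (n <= phi (a' * t)%R)%N by apply: mn; exists (a' * t)%R.
have term : forall i, List.In i l ->
   (if (v i (a' * t)%R < 0)%R then absz (v i (a' * t)%R) else 0)%N =
   (if (v i t < 0)%R then absz (v i t) else 0)%N.
  apply: sum_le_eq; last by move: le1; rewrite -pt; apply.
  move=> i; rewrite dvM //; have := vR i ha a0.
  case: ifP; case: ifP; lia.
split => //.
apply: Rv => bt i.
have b'0 : b' != 0 by apply: contraNneq bt => ->; rewrite mul0r.
rewrite dvM //; have := vR i hb b'0.
case: (lerP 0 (v i t)) => hit; first lia.
have hc := Ct _ Cc; case: hc => _ hc.
have bt0 : b%:F * t != 0 by rewrite mulf_neq0.
have := vR i hc bt0; rewrite dvM // => hcv.
have ii : List.In i l by apply: hl; lia.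
have := term i ii; rewrite dvM //; have := vR i ha a0.
case: Cab => _ Cab.
have abt0 : a' * b' * t != 0 by rewrite !mulf_neq0.
have := vR i Cab abt0; rewrite !dvM ?mulf_neq0 //.
case: ifP; case: ifP; lia.
Qed.

Lemma A2 k j : AC k -> (forall x, Pk j x -> Pk k x) -> forall x, Pk k x -> Pk j x.
Proof.
case=> t [nt Ht] sub x Px; apply: NNPP => nPj.
have CICj : ~ (forall q, Pk j q -> Pk j (t * q)).
  move=> H; apply: nt; apply: (@CIC t (Pk j)) => //; [exact: exists_Pk | by move=> q []].
have claim : forall p, Pk k p -> ~ Pk k (t * p) -> Pk j p.
  move=> p Pp nPtp; apply: NNPP => nPjp; apply: CICj => q Pjq.
  have Ctq : inK (t * q) by have [_ h] := (Ht q).1 (sub q Pjq); rewrite mulrC.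
  have Ctp : inK (t * p) by have [_ h] := (Ht p).1 Pp; rewrite mulrC.
  have p0 : p != 0 by apply/eqP => e; apply: nPjp; rewrite e; exact: Pk0.
  have vjp : v j p = 0.
    have := vR j Pp.1 p0; case: (lerP 1 (v j p)) => h1 h2; last lia.
    by exfalso; apply: nPjp; split => //; case: Pp.
  split => // tq0.
  have hq : Pk j (q * (t * p)) by apply: PkM.
  have e : q * (t * p) = (t * q) * p by rewrite mulrCA mulrA.
  rewrite e in hq; have := hq.2 (mulf_neq0 tq0 p0); rewrite dvM // vjp addr0 //.
have [p0 [Pp0 nPtp0]] : exists p0, Pk k p0 /\ ~ Pk k (t * p0).
  apply: NNPP => H; apply: nt; apply: (@CIC t (Pk k)); [exact: exists_Pk| by move=> q []|].
  by move=> q Pq; apply: NNPP => nq; apply: H; exists q; split.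
case: (classic (Pk k (t * x))) => hx; last by apply: nPj; apply: claim.
have Pj0 := claim _ Pp0 nPtp0.
have : Pk j (p0 + x).
  apply: claim; first by apply: PkD.
  move=> h; apply: nPtp0; have -> : t * p0 = t * (p0 + x) - t * x by rewrite mulrDr addrK.
  exact: PkB.
move=> h; apply: nPj; have -> : x = (p0 + x) - p0 by rewrite addrAC subrr add0r.
exact: PkB.
Qed.

Lemma AC_of_prime t : ~ inK t -> Rprime (Cond t) ->
  exists k, AC k /\ (forall x, Pk k x <-> Cond t x).
Proof.
move=> nt pt; have t0 : t != 0 by apply: contra_not_neq nt => ->; exact: inR0.
case: (PA t0 pt _ (fun x h => h)) => [C1|m [hm sub]].
  by apply: nt; case: C1 => _; rewrite mul1r.
have eq : forall x, Pk m x <-> Cond t x.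
  move=> x; split; first exact: sub.
  case=> h1 h2; split => // x0; have := vR m h2 (mulf_neq0 x0 t0); rewrite dvM //; lia.
by exists m; split => //; exists t.
Qed.

Lemma core y : ~ inK y -> exists m, AC m /\ v m y < 0.
Proof.
move=> ny; have y0 : y != 0 by apply: contra_not_neq ny => ->; exact: inR0.
case: (A4 ny) => t [nt Cyt pt].
case: (AC_of_prime nt pt) => k [ACk Hk].
case: (PA y0 pt _ Cyt) => [C1|m [hm sub]]; first by apply: nt; case: C1 => _; rewrite mul1r.
have sub' : forall x, Pk m x -> Pk k x by move=> x /sub /Hk.
have eqmk : forall x, Pk m x <-> Pk k x by move=> x; split; [exact: sub'|exact: A2].
exists m; split => //; case: ACk => t' [nt' H']; exists t'; split => // x.
by split => h; [apply/H'/eqmk | apply/eqmk/H'].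
Qed.

Lemma RvAC x : (x != 0 -> forall k, AC k -> 0 <= v k x) -> inK x.
Proof.
move=> H; apply: NNPP => nx; case: (core nx) => m [ACm hm].
have x0 : x != 0 by apply: contra_not_neq nx => ->; exact: inR0.
by have := H x0 m ACm; lia.
Qed.

Lemma unit_v0 (r : R) i : r \is a GRing.unit -> v i r%:F = 0.
Proof.
case/unitrP => s [h1 h2].
have s0 : s%:F != 0 by rewrite tofrac_eq0; apply: contra_eq_neq h1 => ->; rewrite mul0r eq_sym oner_neq0.
have r0 : r%:F != 0 by rewrite tofrac_eq0; apply: contra_eq_neq h1 => ->; rewrite mulr0 eq_sym oner_neq0.
have := dvM (v i) s0 r0; rewrite -tofracM h1 tofrac1 dv1.
have := vR i (inR_tofrac s) s0; have := vR i (inR_tofrac r) r0; lia.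
Qed.

Lemma nonunit_of_v (r : R) i : 0 < v i r%:F -> r \isn't a GRing.unit.
Proof. by move=> h; apply/negP => /(unit_v0 i); lia. Qed.

Lemma nonunit_AC (r : R) : r != 0 -> r \isn't a GRing.unit -> exists k, AC k /\ 0 < v k r%:F.
Proof.
move=> r0 nu.
have r0' : r%:F != 0 by rewrite tofrac_eq0.
have : ~ inK (r%:F)^-1.
  case=> s hs; move/negP: nu; apply; apply/unitrP; exists s.
  have e : s * r = 1 by apply/eqP; rewrite -tofrac_eq tofracM -hs mulVf // tofrac1.
  by split => //; rewrite mulrC.
case/core => m [ACm hm]; exists m; split => //; move: hm; rewrite dvV //; lia.
Qed.

Lemma rdvd_v (c a : R) i : a != 0 -> rdvd c a -> v i c%:F <= v i a%:F.
Proof.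
move=> a0 [k e]; subst a.
have k0 : k != 0 by apply: contraNneq a0 => ->; rewrite mul0r.
have c0 : c != 0 by apply: contraNneq a0 => ->; rewrite mulr0.
rewrite tofracM dvM ?tofrac_eq0 //; have := vR i (inR_tofrac k); rewrite tofrac_eq0 => /(_ k0); lia.
Qed.

End Krull.


Section Krull.
Variable R : idomainType.
Local Notation K := {fraction R}.
Local Notation "x %:F" := (@FracField.tofrac R x).
Local Notation inK := (@inR R).
Variable I : Type.
Variable v : I -> dvaluation R.
Hypothesis hR : forall x : K, inK x <-> forall i, in_vring (v i) x.
Hypothesis hfin : forall x : K, x != 0 -> exists l : seq I, forall i, v i x != 0 -> List.In i l.

Local Notation vR := (vR hR).
Local Notation Rv := (Rv hR).
Local Notation PA := (PA hR hfin).
Local Notation A2 := (A2 hR).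
Local Notation core := (core hR hfin).
Local Notation RvAC := (RvAC hR hfin).
Local Notation exists_Pk := (exists_Pk hR).
Local Notation nonunit_AC := (nonunit_AC hR hfin).
Local Notation nonunit_of_v := (nonunit_of_v hR).
Local Notation rdvd_v := (rdvd_v hR).
Local Notation PkM := (PkM hR).

Lemma sum_ge_In (l : seq I) (f : I -> nat) m : List.In m l -> (f m <= \sum_(i <- l) f i)%N.
Proof.
elim: l => [|a l IH] //= [<-|h]; rewrite big_cons; first exact: leq_addr.
by apply: leq_trans (IH h) _; exact: leq_addl.
Qed.

Lemma one_plus (w : dvaluation R) (x : K) : x != 0 -> w x != 0 ->
  [/\ 1 + x != 0, 0 < w x -> w ((1 + x)^-1) = 0 & w x < 0 -> w ((1 + x)^-1) = - w x].
Proof.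
move=> x0 wx.
have o0 : (1 : K) != 0 := oner_neq0 _.
case: (ltrgtP (w x) 0) => hx; last by move/eqP: wx.
- have [h1 h2] : x + 1 != 0 /\ w (x + 1) = w x by apply: dvD_lt; rewrite ?dv1.
  rewrite addrC in h1 h2.
  split; [exact: h1 | move=> h3; exfalso; lia | move=> _; by rewrite dvV // h2].
- have [h1 h2] : 1 + x != 0 /\ w (1 + x) = w 1 by apply: dvD_lt; rewrite ?dv1.
  split; [exact: h1 | move=> _; by rewrite dvV // h2 dv1 oppr0 | move=> h3; exfalso; lia].
Qed.

Lemma uniq_v k k' : AC v k -> (forall x, Pk v k x <-> Pk v k' x) ->
  forall y, y != 0 -> 0 <= v k y -> 0 <= v k' y.
Proof.
move=> ACk hP y y0 hk; case: (lerP 0 (v k' y)) => // hk'.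
exfalso.
case: (exists_Pk k) => a [a0 Pa].
case: (hfin a0) => l hl.
have va : forall m, (forall x, Pk v k x <-> Pk v m x) -> 1 <= v m a.
  by move=> m hm; have [_ h] := (hm a).1 Pa; apply: h.
have aR := Pa.1.
pose L := (absz (v k' a)).+1.
pose y1 := y ^+ L * a.
have y10 : y1 != 0 by rewrite mulf_neq0 ?expf_neq0.
have vy1 : forall m, v m y1 = L%:Z * v m y + v m a by move=> m; rewrite dvM ?expf_neq0 // dvX.
have hy1k : 1 <= v k y1 by rewrite vy1; have := va k (fun x => iff_refl _); nia.
have hy1k' : v k' y1 < 0 by rewrite vy1 /L; have := vR k' aR a0; nia.
pose N := (absz (v k a) + \sum_(i <- l) absz (v i a)).+1.
pose x := a / y1 ^+ N.
have x0 : x != 0 by rewrite mulf_neq0 ?invr_neq0 ?expf_neq0.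
have vx : forall m, v m x = v m a - N%:Z * v m y1.
  by move=> m; rewrite dvDiv ?expf_neq0 // dvX.
have hxk : v k x < 0 by rewrite vx /N; nia.
have hxk' : 0 < v k' x by rewrite vx /N; have := vR k' aR a0; nia.
have hJ : forall m, (forall x, Pk v k x <-> Pk v m x) -> v m x != 0.
  move=> m hm; have vma := va m hm.
  have ml : List.In m l by apply: hl; lia.
  have := sum_ge_In (fun i => absz (v i a)) ml => /= hs.
  rewrite vx /N; apply/eqP => e.
  case: (eqVneq (v m y1) 0) => hz; first by move: e; rewrite hz; lia.
  nia.
have [ex0 _ hek] := one_plus x0 (hJ k (fun x => iff_refl _)).
pose e := (1 + x)^-1.
have e0 : e != 0 by rewrite invr_neq0.
have [s [sR seR nPs]] : exists s, [/\ inK s, inK (s * e) & ~ Pk v k s].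
  apply: NNPP => H.
  have sub : forall s, Cond e s -> Pk v k s.
    by move=> s [h1 h2]; apply: NNPP => h3; apply: H; exists s.
  case: (PA e0 (@Pk_prime _ _ v hR k) (@not_Pk1 _ _ v k) sub) => m [hm subm].
  have eqm : forall x, Pk v k x <-> Pk v m x by move=> z; split; [exact: A2|exact: subm].
  have [_ h1 h2] := one_plus x0 (hJ m eqm).
  move: hm; rewrite /e; case: (ltrgtP (v m x) 0) => hx.
  - by rewrite h2 //; lia.
  - by rewrite h1.
  - by move: (hJ m eqm); rewrite hx eqxx.
have s0 : s != 0 by apply/eqP => es; apply: nPs; rewrite es; exact: (Pk0 v).
have vsk : v k s = 0.
  have := vR k sR s0; case: (lerP 1 (v k s)) => h1 h2; last lia.
  by exfalso; apply: nPs; split.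
have vsk' : v k' s = 0.
  have := vR k' sR s0; case: (lerP 1 (v k' s)) => h1 h2; last lia.
  by exfalso; apply: nPs; apply/hP; split.
have se0 : s * e != 0 by rewrite mulf_neq0.
have : Pk v k (s * e).
  split => // _; rewrite dvM // vsk add0r /e hek //; lia.
move/hP => [_ /(_ se0)]; rewrite dvM // vsk' add0r.
have [_ h1 _] := one_plus x0 (hJ k' hP).
by rewrite /e h1.
Qed.

Lemma eqv_ring (w w' : dvaluation R) :
  (forall y, y != 0 -> 0 <= w y -> 0 <= w' y) ->
  (forall y, y != 0 -> 0 <= w' y -> 0 <= w y) -> forall y, y != 0 -> w y = w' y.
Proof.
move=> h1 h2.
have z0 : forall z, z != 0 -> w z = 0 -> w' z = 0.
  move=> z z0 wz; have := h1 z z0; rewrite wz lexx => /(_ isT).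
  have := h1 z^-1 (invr_neq0 z0); rewrite dvV // wz oppr0 lexx => /(_ isT).
  rewrite dvV //; lia.
case: (dv_surj1 w) => p [p0 wp].
have lin : forall y, y != 0 -> w' y = w y * w' p.
  move=> y y0; case: (lerP 0 (w y)) => hy.
  - pose n := absz (w y).
    have hz : y / p ^+ n != 0 by rewrite mulf_neq0 ?invr_neq0 ?expf_neq0.
    have := z0 _ hz; rewrite !dvDiv ?expf_neq0 // !dvX // wp /n => h.
    have := h ltac:(lia); lia.
  - pose n := absz (w y).
    have hz : y * p ^+ n != 0 by rewrite mulf_neq0 ?expf_neq0.
    have := z0 _ hz; rewrite !dvM ?expf_neq0 // !dvX // wp /n => h.
    have := h ltac:(lia); nia.
have cp : 0 <= w' p by apply: h1 => //; rewrite wp.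
case: (dv_surj1 w') => q [q0 wq].
have := lin q q0; rewrite wq => hq.
have c1 : w' p = 1.
  case: (ltrgtP (w' p) 1) => // h.
  - have e0 : w' p = 0 by lia.
    by move: hq; rewrite e0 mulr0.
  - case: (lerP (w q) 0) => hw; nia.
by move=> y y0; rewrite lin // c1 mulr1.
Qed.

Lemma eqv_of_P k k' : AC v k -> (forall x, Pk v k x <-> Pk v k' x) -> forall y, y != 0 -> v k y = v k' y.
Proof.
move=> ACk hP; have ACk' : AC v k'.
  by case: ACk => t [nt H]; exists t; split => // x; rewrite -hP.
apply: eqv_ring; first exact: uniq_v.
by apply: uniq_v => // x; rewrite hP.
Qed.

End Krull.


Lemma fchoice2 (A B C : Type) (P : A -> B -> C -> Prop) :
  (forall a b, exists c, P a b c) -> exists f : A -> B -> C, forall a b, P a b (f a b).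
Proof.
move=> H; exists (fun a b => proj1_sig (constructive_indefinite_description _ (H a b))).
by move=> a b; exact: (proj2_sig (constructive_indefinite_description _ (H a b))).
Qed.

Lemma fchoice1 (A C : Type) (P : A -> C -> Prop) :
  (forall a, exists c, P a c) -> exists f : A -> C, forall a, P a (f a).
Proof.
move=> H; exists (fun a => proj1_sig (constructive_indefinite_description _ (H a))).
by move=> a; exact: (proj2_sig (constructive_indefinite_description _ (H a))).
Qed.

Section Main.
Variable R : idomainType.
Local Notation K := {fraction R}.
Local Notation "x %:F" := (@FracField.tofrac R x).
Local Notation inK := (@inR R).
Variable I : Type.
Variable v : I -> dvaluation R.
Hypothesis hR : forall x : K, inK x <-> forall i, in_vring (v i) x.
Hypothesis hfin : forall x : K, x != 0 -> exists l : seq I, forall i, v i x != 0 -> List.In i l.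

Local Notation vR := (vR hR).
Local Notation Rv := (Rv hR).
Local Notation PA := (PA hR hfin).
Local Notation A2 := (A2 hR).
Local Notation core := (core hR hfin).
Local Notation RvAC := (RvAC hR hfin).
Local Notation exists_Pk := (exists_Pk hR).
Local Notation nonunit_AC := (nonunit_AC hR hfin).
Local Notation nonunit_of_v := (nonunit_of_v hR).
Local Notation rdvd_v := (rdvd_v hR).
Local Notation eqv_of_P := (eqv_of_P hR hfin).

Definition eqv k k' := forall y : K, y != 0 -> v k y = v k' y.
Definition tors k := exists N : nat, (0 < N)%N /\
  exists x : K, [/\ x != 0, v k x = N%:Z & forall k', AC v k' -> ~ eqv k' k -> v k' x = 0].

Lemma eqv_refl k : eqv k k. Proof. by []. Qed.
Lemma eqv_sym k k' : eqv k k' -> eqv k' k. Proof. by move=> h y y0; rewrite h. Qed.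
Lemma eqv_trans k1 k2 k3 : eqv k1 k2 -> eqv k2 k3 -> eqv k1 k3.
Proof. by move=> h1 h2 y y0; rewrite h1 // h2. Qed.

Lemma AC_eqv k k' : AC v k -> eqv k k' -> AC v k'.
Proof.
case=> t [nt H] e; exists t; split => // x; rewrite -H.
split; case=> h1 h2; split => // x0; [rewrite (e x x0) | rewrite -(e x x0)]; exact: h2.
Qed.

Lemma sep i j : AC v i -> AC v j -> ~ eqv i j ->
  exists r, [/\ inK r, r != 0, v i r = 0 & 1 <= v j r].
Proof.
move=> ACi ACj ne; apply: NNPP => H; apply: ne.
have sub : forall x, Pk v j x -> Pk v i x.
  move=> x Px; apply: NNPP => nPx; apply: H; exists x.
  have x0 : x != 0 by apply/eqP => e; apply: nPx; rewrite e; exact: (Pk0 v).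
  have := vR i Px.1 x0; case: (lerP 1 (v i x)) => h1 h2.
    by exfalso; apply: nPx; split => //; case: Px.
  by split => //; [case: Px | lia | case: Px => _; apply].
apply: eqv_of_P => // x; split; [exact: A2 | exact: sub].
Qed.

Definition powz (x : K) (e : int) := if 0 <= e then x ^+ absz e else (x^-1) ^+ absz e.
Lemma powz_neq0 x e : x != 0 -> powz x e != 0.
Proof. by move=> x0; rewrite /powz; case: ifP => _; rewrite expf_neq0 ?invr_neq0. Qed.
Lemma dv_powz (w : dvaluation R) x e : x != 0 -> w (powz x e) = e * w x.
Proof.
move=> x0; rewrite /powz; case: ifP => h; rewrite dvX ?invr_neq0 // ?dvV //; lia.
Qed.

Lemma inK_sum (s : seq nat) (F : nat -> K) : (forall j, inK (F j)) -> inK (\sum_(j <- s) F j).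
Proof.
move=> H; elim: s => [|a s IH]; first by rewrite big_nil; exact: inR0.
by rewrite big_cons; apply: inRD.
Qed.

Lemma inK_prod (s : seq nat) (F : nat -> K) : (forall j, inK (F j)) -> inK (\prod_(j <- s) F j).
Proof.
move=> H; elim: s => [|a s IH]; first by rewrite big_nil; exact: inR1.
by rewrite big_cons; apply: inRM.
Qed.

Lemma prod_ord_bound n (f : 'I_n -> K) k t :
  (forall i, f i != 0 -> t <= v k (f i)) ->
  \prod_i f i != 0 -> n%:Z * t <= v k (\prod_i f i).
Proof.
elim: n f => [|n IH] f H; first by rewrite big_ord0 dv1 mul0r.
rewrite big_ord_recr /= => hp.
have h1 : \prod_(i < n) f (widen_ord (leqnSn n) i) != 0.
  by apply: contraNneq hp => ->; rewrite mul0r.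
have h2 : f ord_max != 0 by apply: contraNneq hp => ->; rewrite mulr0.
rewrite dvM //; have h3 := IH (fun i => f (widen_ord (leqnSn n) i)) (fun i => H _) h1.
have h4 := H _ h2; move: h3 h4; set P := v k _; set Q := v k _; rewrite -[n.+1]addn1 PoszD mulrDl mul1r; lia.
Qed.

Lemma tors_concl : (forall k, AC v k -> tors k) -> forall F : K -> Prop, fractional_ideal F ->
  exists n, (0 < n)%N /\ exists x : K, x != 0 /\
    forall y, vclos (setpow F n) y <-> principal_frac x y.
Proof.
move=> Htors F [F0 [Fadd [Fmul [[f0 [Ff0 f00]] [d [d0 hd]]]]]].
have d0' : d%:F != 0 by rewrite tofrac_eq0.
have lowb : forall k f, F f -> f != 0 -> 0 <= v k f + v k d%:F.
  move=> k f Ff f0'; have := vR k (hd _ Ff) (mulf_neq0 d0' f0'); rewrite dvM //; lia.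
have hdel : forall k, exists dk : int,
    (exists f, [/\ F f, f != 0 & v k f = dk]) /\ (forall f, F f -> f != 0 -> dk <= v k f).
  move=> k.
  pose P n := exists f, [/\ F f, f != 0 & v k f + v k d%:F = n%:Z].
  case: (@ex_min_nat P) => [|n [[f [Ff f0' ef]] mn]].
    by exists (absz (v k f0 + v k d%:F)); exists f0; split => //; have := lowb k f0 Ff0 f00; lia.
  exists (n%:Z - v k d%:F); split; first by exists f; split => //; lia.
  move=> f' Ff' f'0; have hl := lowb k f' Ff' f'0.
  have hP : P (absz (v k f' + v k d%:F)) by exists f'; split => //; lia.
  have := mn _ hP; lia.
case: (fchoice1 hdel) => del hdel'.
case: (hfin f00) => l0 hl0.
case: (hfin d0') => l1 hl1.
have supp : forall k, del k != 0 -> List.In k (l0 ++ l1).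
  move=> k hk; apply/List.in_or_app.
  case: (eqVneq (v k f0) 0) => h0; last by left; apply: hl0.
  case: (eqVneq (v k d%:F) 0) => h1; last by right; apply: hl1.
  exfalso; have [[f [Ff f0' ef]] hmin] := hdel' k.
  have := hmin _ Ff0 f00; have := lowb k f Ff f0'; move/eqP: hk; lia.
have delE : forall k k', eqv k k' -> del k = del k'.
  move=> k k' e; have [[f [Ff f0' ef]] hmin] := hdel' k.
  have [[f' [Ff' f'0 ef']] hmin'] := hdel' k'.
  have h1 := hmin _ Ff' f'0; have h2 := hmin' _ Ff f0'.
  rewrite (e f' f'0) in h1; rewrite -(e f f0') in h2; lia.
have comb : forall (L : seq I) (dl : I -> int), (forall k k', eqv k k' -> dl k = dl k') ->
    (forall k, AC v k -> dl k != 0 -> List.In k L) ->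
    exists N : nat, (0 < N)%N /\ exists x : K, x != 0 /\ forall k, AC v k -> v k x = N%:Z * dl k.
  elim => [|k1 L IH] dl dlE dlS.
    exists 1%N; split => //; exists 1; split; first exact: oner_neq0.
    move=> k ACk; rewrite dv1; case: (eqVneq (dl k) 0) => [->|h]; first by rewrite mulr0.
    by case: (dlS k ACk h).
  pose dl' k := if excluded_middle_informative (eqv k k1) then 0 else dl k.
  have [N' [N'0 [x' [x'0 hx']]]] : exists N : nat, (0 < N)%N /\ exists x : K, x != 0 /\
      forall k, AC v k -> v k x = N%:Z * dl' k.
    apply: IH.
    - move=> k k' e; rewrite /dl'.
      case: excluded_middle_informative => h1; case: excluded_middle_informative => h2 //.
      + by exfalso; apply: h2; apply: eqv_trans (eqv_sym e) h1.
      + by exfalso; apply: h1; apply: eqv_trans e h2.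
      + exact: dlE.
    - move=> k ACk; rewrite /dl'; case: excluded_middle_informative => // h1 h2.
      case: (dlS k ACk h2) => [ek|//]; exfalso; apply h1; move=> y y0; by rewrite ek.
  case: (classic (AC v k1)) => ACk1; last first.
    exists N'; split => //; exists x'; split => // k ACk; rewrite hx' // /dl'.
    case: excluded_middle_informative => // h.
    by exfalso; apply: ACk1; apply: AC_eqv h.
  case: (Htors k1 ACk1) => N1 [N10 [x1 [x10 vx1 hx1]]].
  exists (N1 * N')%N; split; first by rewrite muln_gt0 N10.
  exists (x' ^+ N1 * powz x1 (dl k1 * N'%:Z)); split.
    by rewrite mulf_neq0 ?expf_neq0 ?powz_neq0.
  move=> k ACk; rewrite dvM ?expf_neq0 ?powz_neq0 // dvX // dv_powz // hx' // /dl'.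
  case: excluded_middle_informative => h.
  - rewrite (h x1 x10) vx1 (dlE _ _ h); rewrite PoszM; ring.
  - rewrite (hx1 k ACk h) PoszM; ring.
have [N [N0 [x [x0 hx]]]] := comb (l0 ++ l1) del delE (fun k _ h => supp k h).
exists N; split => //; exists x; split => // y.
have Sbound : forall s, setpow F N s -> s != 0 -> forall k, N%:Z * del k <= v k s.
  move=> s [f [Ff ->]] s0 k; apply: prod_ord_bound => // i fi0.
  by have [_ hmin] := hdel' k; apply: hmin.
split.
- move=> hy.
  have hxs : finv (setpow F N) x^-1.
    move=> s Ss; apply: RvAC => xs0 k ACk.
    have s0 : s != 0 by apply: contraNneq xs0 => ->; rewrite mulr0.
    rewrite dvM ?invr_neq0 // dvV // hx //; have := Sbound s Ss s0 k; lia.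
  case: (hy _ hxs) => r hr; exists r; by rewrite -hr mulfVK.
- case=> r -> w hw; apply: RvAC => rxw k ACk.
  have r0 : r%:F != 0 by apply: contraNneq rxw => ->; rewrite !mul0r.
  have w0 : w != 0 by apply: contraNneq rxw => ->; rewrite mulr0.
  have [[f [Ff f0' ef]] _] := hdel' k.
  have Sf : setpow F N (f ^+ N).
    exists (fun _ => f); split => // ; by rewrite prodr_const card_ord.
  have := hw _ Sf; move/(vR k); rewrite mulf_neq0 ?expf_neq0 // => /(_ isT).
  rewrite !dvM ?mulf_neq0 ?expf_neq0 // dvX // ef hx //.
  have := vR k (inR_tofrac r) r0; lia.
Qed.

End Main.


Lemma psi_exists (cs : seq nat) (j0 : nat) (L : (nat -> int) -> Prop) :
  uniq cs -> j0 \in cs ->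
  (forall u u', L u -> L u' -> L (fun j => u j - u' j)) ->
  (forall u (z : int), L u -> L (fun j => z * u j)) ->
  (forall u, L u -> (forall j, j \in cs -> j != j0 -> u j = 0) -> u j0 = 0) ->
  exists psi : nat -> rat, psi j0 != 0 /\
    forall u, L u -> \sum_(j <- cs) psi j * (u j)%:~R = 0.
Proof.
move: {2}(size cs) (leqnn (size cs)) => n.
elim: n cs L => [|n IH] cs L.
  by rewrite leqn0 => /nilP -> _.
move=> hs ucs j0cs Lsub Lsc Lnt.
case: (classic (exists l q, [/\ L l, q \in cs, q != j0 & l q != 0])) => [[l [q [Ll qcs qj0 lq0]]]|H].
- pose cs' := rem q cs.
  have ucs' : uniq cs' by apply: rem_uniq.
  have j0cs' : j0 \in cs' by rewrite /cs' (mem_rem_uniq _ ucs) inE eq_sym qj0 j0cs.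
  have qncs' : q \notin cs' by rewrite /cs' (mem_rem_uniq _ ucs) inE eqxx.
  have szcs' : (size cs' <= n)%N by rewrite /cs' size_rem //; move: hs; case: (size cs) => //.
  pose L' u := exists m, L m /\ forall j, u j = l q * m j - m q * l j.
  have LL : forall m, L m -> L (fun j => l q * m j - m q * l j).
    by move=> m Lm; apply: Lsub; apply: Lsc.
  have [psi' [h0 hpsi']] : exists psi' : nat -> rat, psi' j0 != 0 /\
      forall u, L' u -> \sum_(j <- cs') psi' j * (u j)%:~R = 0.
    apply: (IH cs' L') => //.
    - move=> u u' [m [Lm hm]] [m' [Lm' hm']]; exists (fun j => m j - m' j); split.
        by apply: Lsub.
      by move=> j; rewrite hm hm'; ring.
    - move=> u z [m [Lm hm]]; exists (fun j => z * m j); split; first by apply: Lsc.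
      by move=> j; rewrite hm; ring.
    - move=> u [m [Lm hm]] hv; rewrite hm.
      apply: (Lnt _ (LL m Lm)) => j jcs jj0.
      case: (eqVneq j q) => [->|jq]; first by ring.
      by rewrite -hm; apply: hv => //; rewrite /cs' (mem_rem_uniq _ ucs) inE jq jcs.
  pose S := \sum_(i <- cs') psi' i * (l i)%:~R.
  exists (fun j => if j == q then - S / (l q)%:~R else psi' j); split.
    have -> : (j0 == q) = false by apply/negbTE; rewrite eq_sym. done.
  move=> m Lm.
  rewrite (perm_big _ (perm_to_rem qcs)) big_cons eqxx -/cs'.
  have -> : \sum_(j <- cs') (if j == q then - S / (l q)%:~R else psi' j) * (m j)%:~R =
            \sum_(j <- cs') psi' j * (m j)%:~R.
    rewrite big_seq_cond [RHS]big_seq_cond; apply: eq_bigr => j /andP [jc _].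
    by have -> : (j == q) = false by apply/negbTE; apply: contraNneq qncs' => <-.
  have := hpsi' (fun j => l q * m j - m q * l j) (ex_intro _ m (conj Lm (fun j => erefl))).
  have E : \sum_(j <- cs') psi' j * (l q * m j - m q * l j)%:~R =
           (l q)%:~R * \sum_(j <- cs') psi' j * (m j)%:~R - (m q)%:~R * S.
    rewrite /S big_distrr big_distrr -sumrB /=; apply: eq_bigr => j _.
    rewrite intrD intrN !intrM; ring.
  rewrite E => h.
  have lq0' : (l q)%:~R != 0 :> rat by rewrite intr_eq0.
  have -> : \sum_(j <- cs') psi' j * (m j)%:~R = (m q)%:~R * S / (l q)%:~R.
    by apply: (mulfI lq0'); rewrite mulrCA mulfV // mulr1; apply/eqP; rewrite -subr_eq0 h.
  change (- S / (l q)%:~R * (m q)%:~R + (m q)%:~R * S / (l q)%:~R = 0); field => //.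
- exists (fun j => (j == j0)%:R); split; first by rewrite eqxx oner_neq0.
  move=> u Lu; apply: big1 => j _.
  case: (eqVneq j j0) => [->|jj0]; last by rewrite mul0r.
  have -> : u j0 = 0; last by rewrite mulr0.
  apply: Lnt => // j' j'cs j'j0; apply: NNPP => h; apply: H.
  exists u, j'; split => //; exact/eqP.
Qed.


Lemma sum_nonneg_eq0 (s : seq nat) (a : nat -> rat) :
  (forall j, j \in s -> 0 <= a j) -> \sum_(j <- s) a j = 0 -> forall j, j \in s -> a j = 0.
Proof.
elim: s => [|x s IH] // H; rewrite big_cons => hs j.
have h1 : 0 <= a x by apply: H; rewrite mem_head.
have h2 : 0 <= \sum_(i <- s) a i by rewrite big_seq; apply: sumr_ge0 => i iS; apply: H; rewrite inE iS orbT.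
move/eqP: hs; rewrite paddr_eq0 // => /andP [/eqP hx /eqP hS].
rewrite inE => /orP [/eqP -> //|js].
by apply: IH => // i iS; apply: H; rewrite inE iS orbT.
Qed.

Lemma sum_pos_neg (s : seq nat) (a : nat -> rat) :
  \sum_(j <- s) a j = 0 -> (exists2 j, j \in s & 0 < a j) -> exists2 j, j \in s & a j < 0.
Proof.
move=> hs [j js hj]; apply: NNPP => H.
have hnn : forall i, i \in s -> 0 <= a i.
  by move=> i iS; rewrite leNgt; apply/negP => hi; apply: H; exists i.
by have := sum_nonneg_eq0 hnn hs js; move=> e; move: hj; rewrite e ltxx.
Qed.

Lemma nat_sum_ge (s : seq nat) (f : nat -> nat) j : j \in s -> (f j <= \sum_(i <- s) f i)%N.
Proof.
elim: s => [|x s IH] //; rewrite inE big_cons => /orP [/eqP ->|js]; first exact: leq_addr.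
by apply: leq_trans (IH js) _; exact: leq_addl.
Qed.

Lemma nat_sum_lt (s : seq nat) (f g : nat -> nat) :
  (forall j, j \in s -> (f j <= g j)%N) -> (exists2 j, j \in s & (f j < g j)%N) ->
  (\sum_(i <- s) f i < \sum_(i <- s) g i)%N.
Proof.
elim: s => [|x s IH] H [j]; first by [].
rewrite !big_cons inE => /orP [/eqP ->|js] hj.
  have : (\sum_(i <- s) f i <= \sum_(i <- s) g i)%N.
    by rewrite big_seq_cond [X in (_ <= X)%N]big_seq_cond; apply: leq_sum => i /andP [iS _]; apply: H; rewrite inE iS orbT.
  lia.
have h1 := H x (mem_head _ _); have h2 := IH (fun i iS => H i ltac:(by rewrite inE iS orbT)) (ex_intro2 _ _ j js hj).
apply: (@leq_ltn_trans (g x + \sum_(i <- s) f i)); first by rewrite leq_add2r.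
by rewrite ltn_add2l.
Qed.

Lemma int_sum_ge (s : seq nat) (f : nat -> int) j : (forall i, i \in s -> 0 <= f i) ->
  j \in s -> f j <= \sum_(i <- s) f i.
Proof.
elim: s => [|x s IH] // H; rewrite inE big_cons => /orP [/eqP ->|js].
  rewrite lerDl.
  by rewrite big_seq; apply: sumr_ge0 => i iS; apply: H; rewrite inE iS orbT.
have h1 := IH (fun i iS => H i ltac:(by rewrite inE iS orbT)) js.
apply: (le_trans h1); rewrite lerDr; apply: H; exact: mem_head.
Qed.

Section Z.
Variable R : idomainType.
Local Notation K := {fraction R}.
Local Notation "x %:F" := (@FracField.tofrac R x).
Local Notation inK := (@inR R).
Variable I : Type.
Variable v : I -> dvaluation R.
Hypothesis hR : forall x : K, inK x <-> forall i, in_vring (v i) x.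
Hypothesis hfin : forall x : K, x != 0 -> exists l : seq I, forall i, v i x != 0 -> List.In i l.

Local Notation vR := (vR hR).
Local Notation Rv := (Rv hR).
Local Notation core := (core hR hfin).
Local Notation RvAC := (RvAC hR hfin).
Local Notation exists_Pk := (exists_Pk hR).
Local Notation nonunit_of_v := (nonunit_of_v hR).
Local Notation rdvd_v := (rdvd_v hR).
Local Notation sep := (sep hR hfin).
Local Notation eqv := (eqv v).

Lemma vprod_list (s : seq nat) (F : nat -> K) k : (forall j, j \in s -> F j != 0) ->
  \prod_(j <- s) F j != 0 /\ v k (\prod_(j <- s) F j) = \sum_(j <- s) v k (F j).
Proof.
elim: s => [|x s IH] H; first by rewrite !big_nil dv1 oner_neq0.
have [h1 h2] := IH (fun j js => H j ltac:(by rewrite inE js orbT)).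
have hx := H x (mem_head _ _).
rewrite !big_cons; split; first by rewrite mulf_neq0.
by rewrite dvM // h2.
Qed.

Lemma vsum_dom (s : seq nat) (F : nat -> K) k i0 : uniq s -> i0 \in s -> F i0 != 0 ->
  (forall j, j \in s -> j != i0 -> F j != 0 -> v k (F i0) < v k (F j)) ->
  \sum_(j <- s) F j != 0 /\ v k (\sum_(j <- s) F j) = v k (F i0).
Proof.
move=> us i0s F0 H.
have E : \sum_(j <- s) F j = F i0 + \sum_(j <- rem i0 s) F j.
  by rewrite (perm_big _ (perm_to_rem i0s)) big_cons.
rewrite E.
case: (eqVneq (\sum_(j <- rem i0 s) F j) 0) => [->|hS]; first by rewrite addr0.
have hlt : v k (F i0) < v k (\sum_(j <- rem i0 s) F j).
  apply: dv_sum_gt => // j; rewrite (mem_rem_uniq _ us) inE => /andP [ji0 js].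
  exact: H.
exact: dvD_lt.
Qed.

Lemma vsum_ge (s : seq nat) (F : nat -> K) k (M : int) :
  (forall j, j \in s -> F j != 0 -> M <= v k (F j)) ->
  \sum_(j <- s) F j != 0 -> M <= v k (\sum_(j <- s) F j).
Proof.
move=> H hS; have := @dv_sum_gt _ (v k) s F (M - 1).
have h : forall j, j \in s -> F j != 0 -> M - 1 < v k (F j).
  by move=> j js Fj; have := H j js Fj; lia.
move/(_ h hS); lia.
Qed.

Lemma build_T p0 (l : seq I) : AC v p0 -> exists n (t : nat -> I),
  [/\ (0 < n)%N, t 0%N = p0, (forall j, (j < n)%N -> AC v (t j)),
      (forall i j, (i < n)%N -> (j < n)%N -> i != j -> ~ eqv (t i) (t j)) &
      (forall k, AC v k -> List.In k l -> exists2 j, (j < n)%N & eqv k (t j))].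
Proof.
move=> ACp0; elim: l => [|k l [n [t [n0 t0 ACt sept cov]]]].
  exists 1%N, (fun _ => p0); split => //.
  by move=> i j; rewrite !ltnS !leqn0 => /eqP -> /eqP ->; rewrite eqxx.
case: (classic (AC v k /\ ~ exists2 j, (j < n)%N & eqv k (t j))) => [[ACk nk]|H].
- exists n.+1, (fun j => if j == n then k else t j); split.
  + by [].
  + by rewrite eq_sym (negbTE (lt0n_neq0 n0)) t0.
  + move=> j jn; case: (eqVneq j n) => [_|jn']; first exact: ACk.
    apply: ACt; lia.
  + move=> i j; rewrite !ltnS => hi hj ij.
    case: (eqVneq i n) => [ein|nin]; case: (eqVneq j n) => [ejn|njn].
    * by move: ij; rewrite ein ejn eqxx.
    * move=> e; apply: nk; exists j; [lia|exact: e].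
    * move=> e; apply: nk; exists i; [lia|exact: eqv_sym e].
    * apply: sept; lia.
  + move=> k' ACk' [<-|hk'].
      by exists n; [lia|rewrite eqxx; exact: eqv_refl].
    case: (cov k' ACk' hk') => j jn e; exists j; first lia.
    by have -> : (j == n) = false by apply/negbTE; lia.
- exists n, t; split => // k' ACk' [ek|hk']; last exact: cov.
  subst k'; apply: NNPP => nk; apply: H; split => //.
Qed.

End Z.


Section Z3.
Variable R : idomainType.
Local Notation K := {fraction R}.
Local Notation "x %:F" := (@FracField.tofrac R x).
Local Notation inK := (@inR R).
Variable I : Type.
Variable v : I -> dvaluation R.
Hypothesis hR : forall x : K, inK x <-> forall i, in_vring (v i) x.
Hypothesis hfin : forall x : K, x != 0 -> exists l : seq I, forall i, v i x != 0 -> List.In i l.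

Local Notation vR := (vR hR).
Local Notation RvAC := (RvAC hR hfin).
Local Notation nonunit_of_v := (nonunit_of_v hR).
Local Notation rdvd_v := (rdvd_v hR).
Local Notation eqv := (eqv v).
Local Notation vsum_dom := (@vsum_dom _ _ v).
Local Notation vsum_ge := (@vsum_ge _ _ v).

Lemma final_step (Z : Z_property R) (n : nat) (t : nat -> I) (psi : nat -> rat)
  (w : K) (u : nat -> K) (M : nat) :
  w != 0 -> inK w ->
  (forall k, AC v k -> v k w != 0 -> exists2 j, (j < n)%N & eqv k (t j)) ->
  (forall x, x != 0 -> (forall k, AC v k -> (forall j, (j < n)%N -> ~ eqv k (t j)) -> v k x = 0) ->
     \sum_(j <- iota 0 n) psi j * (v (t j) x)%:~R = 0) ->
  (forall z, inK z -> z != 0 -> inK (w / z) ->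
    (forall j, (j < n)%N -> psi j != 0 -> v (t j) z = 0) -> inK z^-1) ->
  forall jp jm, (jp < n)%N -> 0 < psi jp -> 0 < v (t jp) w ->
  (jm < n)%N -> psi jm < 0 -> 0 < v (t jm) w ->
  (forall i, inK (u i)) -> (forall i, u i != 0) ->
  (forall i, (i < n)%N -> v (t i) (u i) = 0) ->
  (forall i j, (i < n)%N -> (j < n)%N -> j != i -> 1 <= v (t j) (u i)) ->
  (forall j, (j < n)%N -> 2 * v (t j) w < M%:Z) ->
  False.
Proof.
move=> w0 wR wcov orth Mprop jp jm jpn hpp hvp jmn hpm hvm uR unz uvi uvj hM.
have vz_nn : forall z k, inK z -> z != 0 -> 0 <= v k z by move=> z k zR z0; exact: vR.
have hM' : forall j, (j < n)%N -> v (t j) w < M%:Z.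
  by move=> j jn; have := hM j jn; have := vz_nn w (t j) wR w0; lia.
have M1 : (1 <= M)%N by have := hM' jp jpn; lia.
pose G (phi : nat -> rat) i := if 0 < phi i then 0 else u i ^+ M * (if phi i == 0 then w else 1).
pose D phi := \sum_(i <- iota 0 n) G phi i.
have GR : forall phi i, inK (G phi i).
  move=> phi i; rewrite /G; case: ifP => _; first exact: inR0.
  by apply: inRM; [apply: inRX | case: ifP => _; [exact: wR | exact: inR1]].
have gnz : forall (phi : nat -> rat) (i : nat), (if phi i == 0 then w else 1) != 0.
  by move=> phi i; case: (phi i == 0); [exact: w0 | exact: oner_neq0].
have Gv : forall phi i j, (i < n)%N -> (j < n)%N -> j != i -> G phi i != 0 -> M%:Z <= v (t j) (G phi i).
  move=> phi i j hi hj ji; rewrite /G; case: ifP => _; first by rewrite eqxx.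
  move=> _; rewrite dvM ?expf_neq0 // dvX //.
  have := uvj i j hi hj ji.
  have : 0 <= v (t j) (if phi i == 0 then w else 1).
    by case: (phi i == 0); apply: vz_nn; [exact: wR| exact: w0| exact: inR1| exact: oner_neq0].
  nia.
have Gvi : forall phi i, (i < n)%N -> ~~ (0 < phi i) -> G phi i != 0 /\
    v (t i) (G phi i) = (if phi i == 0 then v (t i) w else 0).
  move=> phi i hi hpi; rewrite /G (negbTE hpi); split; first by rewrite mulf_neq0 ?expf_neq0.
  rewrite dvM ?expf_neq0 // dvX // uvi // mulr0 add0r.
  by case: ifP => _; rewrite ?dv1.
have Dprop : forall phi, (exists2 j, (j < n)%N & phi j < 0) ->
  [/\ inK (D phi), D phi != 0 & forall j, (j < n)%N ->
    [/\ 0 < phi j -> M%:Z <= v (t j) (D phi), phi j < 0 -> v (t j) (D phi) = 0 &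
        phi j = 0 -> v (t j) (D phi) = v (t j) w]].
  move=> phi [j0 j0n hj0].
  have dom : forall j, (j < n)%N -> ~~ (0 < phi j) ->
      D phi != 0 /\ v (t j) (D phi) = (if phi j == 0 then v (t j) w else 0).
    move=> j jn hj; have [g0 gv] := Gvi phi j jn hj.
    have := @vsum_dom (iota 0 n) (G phi) (t j) j (iota_uniq 0 n) ltac:(by rewrite mem_iota) g0.
    rewrite gv; apply => i; rewrite mem_iota => /andP [_ hi] ij gi0.
    have := Gv phi i j hi jn (ltac:(by rewrite eq_sym)) gi0.
    have := hM' j jn; have := vz_nn w (t j) wR w0.
    case: ifP => _; lia.
  have D0 : D phi != 0 by case: (dom j0 j0n) => //; rewrite -leNgt; exact: ltW.
  split => //; first by apply: inK_sum.
  move=> j jn; split.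
  - move=> hj; apply: vsum_ge => // i; rewrite mem_iota => /andP [_ hi] gi0.
    apply: Gv => //; apply/eqP => ij; subst i; move: gi0; rewrite /G hj eqxx //.
  - move=> hj; have [_ ->] := dom j jn ltac:(by rewrite -leNgt; exact: ltW).
    by rewrite lt_eqF.
  - move=> hj; have [_ ->] := dom j jn ltac:(by rewrite hj ltxx).
    by rewrite hj eqxx.
have casek : forall phi : nat -> rat,
    (forall x, x != 0 -> (forall k, AC v k -> (forall j, (j < n)%N -> ~ eqv k (t j)) -> v k x = 0) ->
       \sum_(j <- iota 0 n) phi j * (v (t j) x)%:~R = 0) ->
    (forall j, psi j != 0 -> phi j != 0) -> (exists2 j, (j < n)%N & phi j < 0) ->
    forall z, inK z -> z != 0 -> (forall k, v k z <= 2 * v k w) -> (forall k, v k z <= v k (D phi)) ->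
    inK z^-1.
  move=> phi horth hne hneg z zR z0 h2w hD.
  have [DR D0 Dv] := Dprop phi hneg.
  have suppz : forall k, AC v k -> (forall j, (j < n)%N -> ~ eqv k (t j)) -> v k z = 0.
    move=> k ACk nk.
    have wk : v k w = 0.
      apply/eqP; apply: contraT => hk; case: (wcov k ACk hk) => j jn e; by case: (nk j jn e).
    by have := h2w k; have := vz_nn z k zR z0; rewrite wk; lia.
  have S := horth z z0 suppz.
  have zneg : forall j, (j < n)%N -> phi j < 0 -> v (t j) z = 0.
    move=> j jn hj; have [_ h _] := Dv j jn; have := hD (t j); rewrite h //.
    by have := vz_nn z (t j) zR z0; lia.
  have tnn : forall j, j \in iota 0 n -> 0 <= phi j * (v (t j) z)%:~R.
    move=> j; rewrite mem_iota => /andP [_ jn].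
    case: (ltrgtP (phi j) 0) => hj.
    - by rewrite zneg // mulr0.
    - by apply: mulr_ge0; [exact: ltW | rewrite ler0z; apply: vz_nn].
    - by rewrite hj mul0r.
  have z0j : forall j, (j < n)%N -> phi j != 0 -> v (t j) z = 0.
    move=> j jn hj; have jI : j \in iota 0 n by rewrite mem_iota leq0n add0n jn.
    have := sum_nonneg_eq0 tnn S jI.
    by move/eqP; rewrite mulf_eq0 (negbTE hj) /= intr_eq0 => /eqP.
  have wz0 : w / z != 0 by rewrite mulf_neq0 ?invr_neq0.
  apply: Mprop => //; last by move=> j jn hj; apply: z0j => //; apply: hne.
  apply: RvAC => _ k ACk; rewrite dvDiv //.
  case: (classic (exists2 j, (j < n)%N & eqv k (t j))) => [[j jn e]|nj].
  - rewrite (e w w0) (e z z0).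
    case: (eqVneq (phi j) 0) => hj.
    + have [_ _ h] := Dv j jn; have := hD (t j); rewrite h //; lia.
    + rewrite z0j //; have := vz_nn w (t j) wR w0; lia.
  - rewrite suppz //; first by have := vz_nn w k wR w0; lia.
    by move=> j jn ej; apply: nj; exists j.
have hnegd : exists2 j, (j < n)%N & psi j < 0 by exists jm.
have hnege : exists2 j, (j < n)%N & - psi j < 0 by exists jp => //; rewrite oppr_lt0.
have [dR d0 dv] := Dprop psi hnegd.
have [eR e0 ev] := Dprop (fun j => - psi j) hnege.
set d := D psi in dR d0 dv *.
set e := D (fun j => - psi j) in eR e0 ev *.
pose c := d * e / (w * w).
have c0 : c != 0 by rewrite /c !mulf_neq0 ?invr_neq0 ?mulf_neq0.
have vc : forall k, v k c = v k d + v k e - 2 * v k w.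
  by move=> k; rewrite /c dvDiv ?mulf_neq0 // !dvM //; lia.
have cR : inK c.
  apply: RvAC => _ k ACk; rewrite vc.
  case: (classic (exists2 j, (j < n)%N & eqv k (t j))) => [[j jn ej]|nj].
  - rewrite (ej w w0) (ej d d0) (ej e e0).
    have [hd1 hd2 hd3] := dv j jn; have [he1 he2 he3] := ev j jn.
    have := hM j jn; have := vz_nn w (t j) wR w0.
    case: (ltrgtP (psi j) 0) => hj.
    + rewrite hd2 //; have := he1 ltac:(by rewrite oppr_gt0); lia.
    + rewrite he2 ?oppr_lt0 //; have := hd1 hj; lia.
    + rewrite hd3 // he3 ?hj ?oppr0 //; lia.
  - have wk : v k w = 0.
      apply/eqP; apply: contraT => hk; case: (wcov k ACk hk) => j jn e'; by case: (nj (ex_intro2 _ _ j jn e')).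
    rewrite wk; have := vz_nn d k dR d0; have := vz_nn e k eR e0; lia.
have vcp : 0 < v (t jp) c.
  rewrite vc; have [hd1 _ _] := dv jp jpn; have [_ he2 _] := ev jp jpn.
  rewrite he2 ?oppr_lt0 //; have := hd1 hpp; have := hM jp jpn; lia.
case: wR => wr hw; case: dR => dr hd; case: eR => er he; case: cR => cr hc.
have wr0 : wr != 0 by rewrite -tofrac_eq0 -hw.
have Zr := Z wr wr cr dr er.
have nnw : nonzero_nonunit wr by split => //; apply: (nonunit_of_v (i := t jp)); rewrite -hw.
have nnc : nonzero_nonunit cr.
  by split; [rewrite -tofrac_eq0 -hc | apply: (nonunit_of_v (i := t jp)); rewrite -hc].
have nnd : nonzero_nonunit dr.
  split; first by rewrite -tofrac_eq0 -hd.
  apply: (nonunit_of_v (i := t jp)); rewrite -hd; have [hd1 _ _] := dv jp jpn; have := hd1 hpp; lia.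
have nne : nonzero_nonunit er.
  split; first by rewrite -tofrac_eq0 -he.
  apply: (nonunit_of_v (i := t jm)); rewrite -he; have [he1 _ _] := ev jm jmn.
  have := he1 ltac:(by rewrite oppr_gt0); lia.
have eq : wr * wr * cr = dr * er.
  apply/eqP; rewrite -tofrac_eq !tofracM -hw -hc -hd -he /c; apply/eqP.
  by field.
have ww0 : wr * wr != 0 by rewrite mulf_neq0.
have fin : forall (phi : nat -> rat) (xr : R), xr%:F = D phi ->
    (forall x, x != 0 -> (forall k, AC v k -> (forall j, (j < n)%N -> ~ eqv k (t j)) -> v k x = 0) ->
       \sum_(j <- iota 0 n) phi j * (v (t j) x)%:~R = 0) ->
    (forall j, psi j != 0 -> phi j != 0) -> (exists2 j, (j < n)%N & phi j < 0) ->
    common_nonunit_divisor (wr * wr) xr -> False.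
  move=> phi xr hx horth hne hneg [zr [zn [hz1 hz2]]].
  have zr0 : zr != 0 by apply: contraNneq ww0 => ez; case: hz1 => q ->; rewrite ez mulr0.
  have xr0 : xr != 0 by rewrite -tofrac_eq0 hx; case: (Dprop phi hneg).
  have hz : inK (zr%:F)^-1.
    apply: (casek phi horth hne hneg).
    - exact: inR_tofrac.
    - by rewrite tofrac_eq0.
    - move=> k; have := rdvd_v k ww0 hz1; rewrite tofracM -hw dvM //; lia.
    - by move=> k; rewrite -hx; apply: rdvd_v.
  move: hz.
  case=> s hs; case/negP: zn; apply/unitrP; exists s.
  have es : s * zr = 1.
    apply/eqP; rewrite -tofrac_eq tofracM -hs tofrac1 mulVf // tofrac_eq0 //.
  by split => //; rewrite mulrC.
case: (Zr nnw nnw nnc nnd nne eq) => hcd.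
- by apply: (fin psi dr (esym hd) orth) => //; exists jm.
- apply: (fin (fun j => - psi j) er (esym he)) => //.
  + move=> x x0 sx.
    rewrite (eq_bigr (fun j => - (psi j * (v (t j) x)%:~R))); last by move=> j _; rewrite mulNr.
    by rewrite sumrN orth // oppr0.
  + by move=> j; rewrite oppr_eq0.
Qed.


End Z3.


Lemma rat_pos_prod (q : rat) (m : int) : 0 <= m -> 0 < q * m%:~R -> 0 < q /\ 0 < m.
Proof.
move=> m0 h; case: (ltrgtP m 0) => hm; first lia.
- have hm' : 0 < m%:~R :> rat by rewrite ltr0z.
  by split => //; move: h; rewrite pmulr_lgt0.
- by move: h; rewrite hm mulr0 ltxx.
Qed.

Lemma rat_neg_prod (q : rat) (m : int) : 0 <= m -> q * m%:~R < 0 -> q < 0 /\ 0 < m.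
Proof.
move=> m0 h; have := @rat_pos_prod (- q) m m0; rewrite mulNr oppr_gt0 => /(_ h) [].
by rewrite oppr_gt0.
Qed.

Section Z2.
Variable R : idomainType.
Local Notation K := {fraction R}.
Local Notation "x %:F" := (@FracField.tofrac R x).
Local Notation inK := (@inR R).
Variable I : Type.
Variable v : I -> dvaluation R.
Hypothesis hR : forall x : K, inK x <-> forall i, in_vring (v i) x.
Hypothesis hfin : forall x : K, x != 0 -> exists l : seq I, forall i, v i x != 0 -> List.In i l.

Local Notation vR := (vR hR).
Local Notation Rv := (Rv hR).
Local Notation core := (core hR hfin).
Local Notation RvAC := (RvAC hR hfin).
Local Notation exists_Pk := (exists_Pk hR).
Local Notation nonunit_of_v := (nonunit_of_v hR).
Local Notation rdvd_v := (rdvd_v hR).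
Local Notation sep := (sep hR hfin).
Local Notation eqv := (eqv v).
Local Notation vprod_list := (@vprod_list _ _ v).
Local Notation vsum_dom := (@vsum_dom _ _ v).
Local Notation vsum_ge := (@vsum_ge _ _ v).

Lemma Z_tors : Z_property R -> forall p0, AC v p0 -> tors v p0.
Proof.
move=> Z p0 ACp0; apply: NNPP => ntors.
case: (exists_Pk p0) => w0 [w00 [w0R w0p]].
case: (hfin w00) => l hl.
case: (@build_T _ _ v p0 l ACp0) => n [t [n0 t0 ACt sept cov0]].
pose supp (x : K) := forall k, AC v k -> (forall j, (j < n)%N -> ~ eqv k (t j)) -> v k x = 0.
pose L (u : nat -> int) := exists x, [/\ x != 0, (forall j, (j < n)%N -> u j = v (t j) x) & supp x].
have [psi [psi0 hpsi]] : exists psi : nat -> rat, psi 0%N != 0 /\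
    forall u, L u -> \sum_(j <- iota 0 n) psi j * (u j)%:~R = 0.
  apply: psi_exists.
  - exact: iota_uniq.
  - by rewrite mem_iota.
  - move=> u u' [x [x0 hx sx]] [x' [x'0 hx' sx']]; exists (x / x'); split.
    + by rewrite mulf_neq0 ?invr_neq0.
    + by move=> j jn; rewrite dvDiv // hx // hx'.
    + by move=> k ACk hk; rewrite dvDiv // sx // sx' // subr0.
  - move=> u z [x [x0 hx sx]]; exists (powz x z); split.
    + exact: powz_neq0.
    + by move=> j jn; rewrite dv_powz // hx.
    + by move=> k ACk hk; rewrite dv_powz // sx // mulr0.
  - move=> u [x [x0 hx sx]] hv; apply: NNPP => hu0; apply: ntors.
    have hu : u 0%N = v p0 x by rewrite hx // t0.
    exists (absz (u 0%N)); split; first lia.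
    exists (if 0 < u 0%N then x else x^-1); split.
    + by case: ifP => _; rewrite ?invr_neq0.
    + case: (boolP (0 < u 0%N)) => h; rewrite ?dvV // -hu; lia.
    + move=> k' ACk' nk'.
      have vk0 : v k' x = 0.
        case: (classic (exists2 j, (j < n)%N & eqv k' (t j))) => [[j jn e]|nj].
        * rewrite (e x x0) -hx //; apply: hv; first by rewrite mem_iota; lia.
          apply/eqP => j0; apply: nk'; rewrite -t0 -j0; exact: e.
        * by apply: sx => // j jn ej; apply: nj; exists j.
      by case: ifP => _; rewrite ?dvV // vk0 ?oppr0.
have cov : forall k, AC v k -> v k w0 != 0 -> exists2 j, (j < n)%N & eqv k (t j).
  by move=> k ACk hk; apply: cov0 => //; apply: hl.
pose W (w : K) := [/\ w != 0, inK w,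
  (forall k, AC v k -> v k w != 0 -> exists2 j, (j < n)%N & eqv k (t j)) &
  (forall j, (j < n)%N -> psi j != 0 -> v (t j) w = v (t j) w0)].
pose sz (w : K) := (\sum_(j <- iota 0 n) absz (v (t j) w))%N.
case: (@ex_min_nat (fun m => exists w, W w /\ sz w = m)) => [|m [[w [[w0' wR wcov wc] szw]] minw]].
  by exists (sz w0), w0; split => //; split.
have wsupp : supp w.
  move=> k ACk nk; apply/eqP; apply: contraT => hk.
  by case: (wcov k ACk hk) => j jn e; case: (nk j jn e).
have vz_nn : forall z k, inK z -> z != 0 -> 0 <= v k z by move=> z k zR z0; exact: vR.
have Mprop : forall z, inK z -> z != 0 -> inK (w / z) ->
    (forall j, (j < n)%N -> psi j != 0 -> v (t j) z = 0) -> inK z^-1.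
  move=> z zR z0 wzR hz; apply: NNPP => nz.
  case: (core nz) => k [ACk hk]; rewrite dvV // in hk.
  have wz0 : w / z != 0 by rewrite mulf_neq0 ?invr_neq0.
  have vzw : forall k', v k' z <= v k' w.
    by move=> k'; have := vR k' wzR wz0; rewrite dvDiv //; lia.
  have Ww' : W (w / z).
    split => //.
    - move=> k' ACk' h; apply: wcov => //; apply/eqP => e; move: h.
      rewrite dvDiv // e; have := vzw k'; have := vz_nn z k' zR z0; rewrite e => a b.
      by have -> : v k' z = 0 by lia.
    - by move=> j jn pj; rewrite dvDiv // hz // subr0; exact: wc.
  have h1 : (m <= sz (w / z))%N by apply: minw; exists (w / z).
  have h2 : (sz (w / z) < sz w)%N.
    apply: nat_sum_lt.
    - by move=> j _; rewrite dvDiv //; have := vzw (t j); have := vz_nn z (t j) zR z0; lia.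
    - have hkw : v k w != 0 by apply/eqP; have := vzw k; lia.
      case: (wcov k ACk hkw) => j jn e; exists j; first by rewrite mem_iota; lia.
      rewrite dvDiv // -(e z z0) -(e w w0'); have := vzw k; lia.
  by move: h1 h2; rewrite szw; lia.
have orth : forall x, x != 0 -> supp x -> \sum_(j <- iota 0 n) psi j * (v (t j) x)%:~R = 0.
  by move=> x x0 sx; apply: (hpsi (fun j => v (t j) x)); exists x; split.
have vwn : forall j, 0 <= v (t j) w by move=> j; exact: vz_nn.
have hw0 : 1 <= v (t 0%N) w by rewrite wc // t0; apply: w0p.
have Sw := orth w w0' wsupp.
pose a j := psi j * (v (t j) w)%:~R.
have Sw' : \sum_(j <- iota 0 n) (- a j) = 0 by rewrite sumrN Sw oppr0.
have i0 : 0%N \in iota 0 n by rewrite mem_iota.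
have [[jp jpI hjp] [jm jmI hjm]] : (exists2 j, j \in iota 0 n & 0 < a j) /\ (exists2 j, j \in iota 0 n & a j < 0).
  have vw0 : 0 < (v (t 0%N) w)%:~R :> rat by rewrite ltr0z; lia.
  case: (ltrgtP (psi 0%N) 0) => hp.
  - have h0 : a 0%N < 0 by rewrite /a pmulr_llt0.
    split; last by exists 0%N.
    have h0' : 0 < - a 0%N by rewrite oppr_gt0.
    case: (sum_pos_neg Sw' (ex_intro2 _ _ 0%N i0 h0')) => j jI hj.
    by exists j => //; rewrite -oppr_lt0.
  - have h0 : 0 < a 0%N by rewrite /a pmulr_lgt0.
    split; first by exists 0%N.
    exact: (sum_pos_neg Sw (ex_intro2 _ _ 0%N i0 h0)).
  - by move: psi0; rewrite hp eqxx.
have [hpp hvp] := rat_pos_prod (vwn jp) hjp.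
have [hpm hvm] := rat_neg_prod (vwn jm) hjm.
have jpn : (jp < n)%N by move: jpI; rewrite mem_iota.
have jmn : (jm < n)%N by move: jmI; rewrite mem_iota.
have [rr hrr] : exists rr : nat -> nat -> K, forall i j, [/\ inK (rr i j), rr i j != 0 &
    ((i < n)%N -> (j < n)%N -> i != j -> v (t i) (rr i j) = 0 /\ 1 <= v (t j) (rr i j))].
  apply: (@fchoice2 nat nat K (fun i j r => [/\ inK r, r != 0 &
    ((i < n)%N -> (j < n)%N -> i != j -> v (t i) r = 0 /\ 1 <= v (t j) r)])) => i j.
  case: (classic ((i < n)%N /\ (j < n)%N /\ i != j)) => [[hi [hj ij]]|H].
    case: (sep (ACt i hi) (ACt j hj) (sept i j hi hj ij)) => r [r1 r2 r3 r4].
    by exists r; split.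
  exists 1; split; [exact: inR1 | exact: oner_neq0 |].
  by move=> hi hj ij; exfalso; apply: H.
pose F i j := if j == i then (1 : K) else rr i j.
pose u i := \prod_(j <- iota 0 n) F i j.
have Fnz : forall i j, F i j != 0.
  by move=> i j; rewrite /F; case: (eqVneq j i) => _; [exact: oner_neq0 | case: (hrr i j)].
have FR : forall i j, inK (F i j).
  by move=> i j; rewrite /F; case: (eqVneq j i) => _; [exact: inR1 | case: (hrr i j)].
have uR : forall i, inK (u i) by move=> i; apply: inK_prod.
have unz : forall i, u i != 0.
  by move=> i; exact: (vprod_list (t 0%N) (fun j (_ : j \in iota 0 n) => Fnz i j)).1.
have uv : forall i k, v k (u i) = \sum_(j <- iota 0 n) v k (F i j).
  by move=> i k; exact: (vprod_list k (fun j (_ : j \in iota 0 n) => Fnz i j)).2.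
have uvi : forall i, (i < n)%N -> v (t i) (u i) = 0.
  move=> i hi; rewrite uv; apply: big1_seq => j /andP [_]; rewrite mem_iota => /andP [_ hj].
  rewrite /F; case: (eqVneq j i) => [_|ji]; first exact: dv1.
  by case: (hrr i j) => _ _ /(_ hi hj); rewrite eq_sym => /(_ ji) [].
have uvj : forall i j, (i < n)%N -> (j < n)%N -> j != i -> 1 <= v (t j) (u i).
  move=> i j hi hj ji; rewrite uv.
  have h1 : 1 <= v (t j) (F i j).
    by rewrite /F (negbTE ji); case: (hrr i j) => _ _ /(_ hi hj); rewrite eq_sym => /(_ ji) [].
  have h2 : v (t j) (F i j) <= \sum_(j' <- iota 0 n) v (t j) (F i j').
    by apply: int_sum_ge; [move=> i' _; apply: vz_nn | rewrite mem_iota; lia].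
  exact: le_trans h1 h2.
have hM : forall j, (j < n)%N -> 2 * v (t j) w < ((2 * sz w).+1)%:Z.
  move=> j jn.
  have : (absz (v (t j) w) <= sz w)%N.
    by apply: (@nat_sum_ge (iota 0 n) (fun j => absz (v (t j) w))); rewrite mem_iota; lia.
  have := vwn j; lia.
exact: (final_step hR hfin Z w0' wR wcov orth Mprop jpn hpp hvp jmn hpm hvm uR unz uvi uvj hM).
Qed.

End Z2.


Unset Implicit Arguments.
Theorem mainTheorem6 (R : idomainType) :
  Krull_domain R -> Z_property R -> class_group_torsion R.
Proof.
case=> I [v [hR hfin]] Z F [fF _].
apply: (tors_concl hR hfin) => // k ACk.
exact: (Z_tors hR hfin Z ACk).
Qed.
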